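(* Let $R\in(0,1)$ and let $c\colon[R,1]\to(0,\infty)$ be $C^{1,1}$ and satisfy the Herglotz condition $\frac{d}{dr}\left(\frac{r}{c(r)}\right)>0$. For a Lipschitz continuous $\lambda\colon[R,1]\to\mathbb C$, the function $$\Lambda^\lambda(r;x)=\cosh\left(\int_x^r\lambda(u)H(u;x)\,du\right)$$ is Lipschitz continuous on $\{(r,x);R\leq x<r\leq1\}$. It extends continuously to the diagonal $\{(r,r);R\leq r\leq1\}$ and has the constant value $1$ there.
   Context: $H(r;z)=\frac1{c(r)}\left(1-\left(\frac{z\,c(r)}{r\,c(z)}\right)^2\right)^{-1/2}$ for $R\leq z<r\leq1$. *)

(* Defs.v *)
From Stdlib Require Import Reals.
From Coquelicot Require Import Coquelicot.
Open Scope R_scope.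

Definition has_deriv_on (f f' : R -> R) (a b : R) : Prop :=
  forall t, a <= t <= b ->
  forall eps, 0 < eps -> exists delta, 0 < delta /\
    forall s, a <= s <= b -> Rabs (s - t) < delta ->
      Rabs (f s - f t - f' t * (s - t)) <= eps * Rabs (s - t).

Definition lipschitz_on (f : R -> R) (a b : R) : Prop :=
  exists L, forall s t, a <= s <= b -> a <= t <= b ->
    Rabs (f s - f t) <= L * Rabs (s - t).

Definition lipschitz_on_C (f : R -> C) (a b : R) : Prop :=
  exists L, forall s t, a <= s <= b -> a <= t <= b ->
    Cmod (Cminus (f s) (f t)) <= L * Rabs (s - t).

Definition C11_on (f : R -> R) (a b : R) : Prop :=
  exists f', has_deriv_on f f' a b /\ lipschitz_on f' a b.

Definition Hfun (c : R -> R) (r z : R) : R :=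
  / c r * / sqrt (1 - (z * c r / (r * c z)) ^ 2).

Definition cexp (z : C) : C :=
  (exp (fst z) * cos (snd z), exp (fst z) * sin (snd z)).
Definition ccosh (z : C) : C :=
  Cmult (RtoC (/ 2)) (Cplus (cexp z) (cexp (Copp z))).

Definition tri (a b r x : R) : Prop := a <= x /\ x < r /\ r <= b.

(* Main.v *)
Require Import Defs.
From Stdlib Require Import Reals Lra.
From Coquelicot Require Import Coquelicot.
Open Scope R_scope.
Lemma Cnorm (z : C) : norm (K:=R_AbsRing) (V:=C_R_NormedModule) z = Cmod z.
Proof. destruct z as [a b]. unfold norm; simpl. unfold prod_norm, Cmod; simpl.
 unfold norm; simpl; unfold abs; simpl. f_equal. assert (Rabs a * Rabs a = a*a) by (rewrite <- Rabs_mult; apply Rabs_right; nra). assert (Rabs b * Rabs b = b*b) by (rewrite <- Rabs_mult; apply Rabs_right; nra). nra. Qed.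
Lemma Cscal (r : R) (z : C) : scal (V:=C_R_NormedModule) r z = Cmult (RtoC r) z.
Proof. destruct z as [a b]. unfold scal; simpl. unfold prod_scal; simpl. unfold scal; simpl. unfold mult; simpl. unfold Cmult, RtoC; simpl. f_equal; ring. Qed.
Lemma Cminus_eq (y z : C) : minus (G:=C_R_NormedModule) y z = Cminus y z.
Proof. destruct y, z. reflexivity. Qed.
Lemma Cplus_eq (y z : C) : plus (G:=C_R_NormedModule) y z = Cplus y z.
Proof. destruct y, z. reflexivity. Qed.
Lemma cont_lipC (h : R -> C) (t L : R) : (forall s, Cmod (Cminus (h s) (h t)) <= L * Rabs (s - t)) -> continuous (T:=R_UniformSpace) (U:=C_R_NormedModule) h t.
Proof.
intros H. apply (proj2 (filterlim_locally_ball_norm (F:=locally t) h (h t))).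
intros eps. unfold ball_norm.
assert (0 < Rmax L 1) by (generalize (Rmax_r L 1); lra).
assert (Hd : 0 < eps / Rmax L 1) by (apply Rdiv_lt_0_compat; [apply cond_pos|lra]).
exists (mkposreal _ Hd). intros s Hs. simpl in Hs. unfold ball in Hs; simpl in Hs. unfold AbsRing_ball in Hs. unfold abs, minus, plus, opp in Hs; simpl in Hs.
unfold norm, minus, plus, opp; simpl.
eapply Rle_lt_trans. apply H.
apply Rle_lt_trans with (Rmax L 1 * Rabs (s - t)).
apply Rmult_le_compat_r. apply Rabs_pos. apply Rmax_l.
replace (pos eps) with (Rmax L 1 * (eps / Rmax L 1)) by (field; lra).
apply Rmult_lt_compat_l. lra. exact Hs.
Qed.
Lemma cont_lipR (h : R -> R) (t L : R) : (forall s, Rabs (h s - h t) <= L * Rabs (s - t)) -> continuous h t.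
Proof.
intros H. apply (proj2 (filterlim_locally_ball_norm (F:=locally t) h (h t))).
intros eps. unfold ball_norm.
assert (0 < Rmax L 1) by (generalize (Rmax_r L 1); lra).
assert (Hd : 0 < eps / Rmax L 1) by (apply Rdiv_lt_0_compat; [apply cond_pos|lra]).
exists (mkposreal _ Hd). intros s Hs. simpl in Hs. unfold ball in Hs; simpl in Hs. unfold AbsRing_ball in Hs. unfold abs, minus, plus, opp in Hs; simpl in Hs.
unfold norm, minus, plus, opp; simpl. unfold abs; simpl.
eapply Rle_lt_trans. apply H.
apply Rle_lt_trans with (Rmax L 1 * Rabs (s - t)).
apply Rmult_le_compat_r. apply Rabs_pos. apply Rmax_l.
replace (pos eps) with (Rmax L 1 * (eps / Rmax L 1)) by (field; lra).
apply Rmult_lt_compat_l. lra. exact Hs.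
Qed.
Section Lip.
Variable T : Type.
Variable d : T -> T -> R.
Hypothesis d_pos : forall s t, 0 <= d s t.

Definition isLip (f : T -> R) := exists L, 0 <= L /\ forall s t, Rabs (f s - f t) <= L * d s t.
Definition isBnd (f : T -> R) := exists B, 0 <= B /\ forall t, Rabs (f t) <= B.
Definition isLipC (f : T -> C) := exists L, 0 <= L /\ forall s t, Cmod (Cminus (f s) (f t)) <= L * d s t.
Definition isBndC (f : T -> C) := exists B, 0 <= B /\ forall t, Cmod (f t) <= B.

Lemma lip_const c : isLip (fun _ => c).
Proof. exists 0. split. lra. intros. replace (c - c) with 0 by ring. rewrite Rabs_R0. specialize (d_pos s t). nra. Qed.

Lemma bnd_const c : isBnd (fun _ => c).
Proof. exists (Rabs c). split. apply Rabs_pos. intros; lra. Qed.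

Lemma lip_plus f g : isLip f -> isLip g -> isLip (fun t => f t + g t).
Proof. intros [L1 [H1 F]] [L2 [H2 G]]. exists (L1 + L2). split. lra. intros s t.
replace (f s + g s - (f t + g t)) with ((f s - f t) + (g s - g t)) by ring.
eapply Rle_trans. apply Rabs_triang. specialize (F s t). specialize (G s t). nra. Qed.

Lemma bnd_plus f g : isBnd f -> isBnd g -> isBnd (fun t => f t + g t).
Proof. intros [L1 [H1 F]] [L2 [H2 G]]. exists (L1 + L2). split. lra. intros t.
eapply Rle_trans. apply Rabs_triang. specialize (F t). specialize (G t). nra. Qed.

Lemma lip_opp f : isLip f -> isLip (fun t => - f t).
Proof. intros [L1 [H1 F]]. exists L1. split. lra. intros s t.
replace (- f s - - f t) with (- (f s - f t)) by ring. rewrite Rabs_Ropp. auto. Qed.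

Lemma bnd_opp f : isBnd f -> isBnd (fun t => - f t).
Proof. intros [L1 [H1 F]]. exists L1. split. lra. intros t. rewrite Rabs_Ropp. auto. Qed.

Lemma lip_minus f g : isLip f -> isLip g -> isLip (fun t => f t - g t).
Proof. intros. apply (lip_plus f (fun t => - g t)); auto. apply lip_opp; auto. Qed.

Lemma bnd_minus f g : isBnd f -> isBnd g -> isBnd (fun t => f t - g t).
Proof. intros. apply (bnd_plus f (fun t => - g t)); auto. apply bnd_opp; auto. Qed.

Lemma lip_mult f g : isLip f -> isLip g -> isBnd f -> isBnd g -> isLip (fun t => f t * g t).
Proof. intros [L1 [H1 F]] [L2 [H2 G]] [B1 [HB1 Bf]] [B2 [HB2 Bg]]. exists (B1 * L2 + B2 * L1).
split. nra.
intros s t.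
replace (f s * g s - f t * g t) with (f s * (g s - g t) + g t * (f s - f t)) by ring.
eapply Rle_trans. apply Rabs_triang. rewrite !Rabs_mult.
specialize (F s t). specialize (G s t). specialize (Bf s). specialize (Bg t).
generalize (Rabs_pos (f s)) (Rabs_pos (g t)) (Rabs_pos (f s - f t)) (Rabs_pos (g s - g t)) (d_pos s t). intros.
apply Rle_trans with (B1 * Rabs (g s - g t) + B2 * Rabs (f s - f t)). nra. nra.
Qed.

Lemma bnd_mult f g : isBnd f -> isBnd g -> isBnd (fun t => f t * g t).
Proof. intros [B1 [HB1 Bf]] [B2 [HB2 Bg]]. exists (B1 * B2). split. nra. intros t.
rewrite Rabs_mult. specialize (Bf t). specialize (Bg t).
generalize (Rabs_pos (f t)) (Rabs_pos (g t)). intros. nra. Qed.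

Lemma lip_inv f m : 0 < m -> (forall t, m <= f t) -> isLip f -> isLip (fun t => / f t).
Proof. intros Hm Hf [L [HL F]]. exists (L / (m * m)). split. apply Rdiv_le_0_compat; nra.
intros s t. assert (0 < f s) by (specialize (Hf s); lra). assert (0 < f t) by (specialize (Hf t); lra).
replace (/ f s - / f t) with ((f t - f s) / (f s * f t)) by (field; lra).
unfold Rdiv. rewrite Rabs_mult. rewrite (Rabs_right (/ (f s * f t))).
2: { apply Rle_ge. left. apply Rinv_0_lt_compat. nra. }
rewrite <- Rabs_Ropp. replace (- (f t - f s)) with (f s - f t) by ring.
specialize (F s t). specialize (Hf s) as Hs. specialize (Hf t) as Ht.
assert (/ (f s * f t) <= / (m * m)). { apply Rinv_le_contravar. nra. nra. }
assert (0 <= / (f s * f t)). { left. apply Rinv_0_lt_compat. nra. }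
generalize (Rabs_pos (f s - f t)) (d_pos s t). intros.
apply Rle_trans with (L * d s t * / (f s * f t)). nra.
replace (L * / (m * m) * d s t) with (L * d s t * / (m*m)) by ring. nra.
Qed.

Lemma bnd_inv f m : 0 < m -> (forall t, m <= f t) -> isBnd (fun t => / f t).
Proof. intros Hm Hf. exists (/ m). split. left. apply Rinv_0_lt_compat; lra. intros t.
specialize (Hf t). rewrite Rabs_right. apply Rinv_le_contravar; lra.
apply Rle_ge. left. apply Rinv_0_lt_compat; lra. Qed.

Lemma lip_sqrt f m : 0 < m -> (forall t, m <= f t) -> isLip f -> isLip (fun t => sqrt (f t)).
Proof. intros Hm Hf [L [HL F]]. exists (L / sqrt m).
assert (0 < sqrt m) by (apply sqrt_lt_R0; lra).
split. apply Rdiv_le_0_compat; lra.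
intros s t. specialize (Hf s) as Hs. specialize (Hf t) as Ht.
assert (sqrt m <= sqrt (f s)) by (apply sqrt_le_1_alt; lra).
assert (sqrt m <= sqrt (f t)) by (apply sqrt_le_1_alt; lra).
assert (E : sqrt (f s) - sqrt (f t) = (f s - f t) / (sqrt (f s) + sqrt (f t))).
{ field_simplify_eq. 2: lra. rewrite <- !Rsqr_pow2. rewrite !Rsqr_sqrt; lra. }
rewrite E. unfold Rdiv. rewrite Rabs_mult. rewrite (Rabs_right (/ _)).
2: { apply Rle_ge. left. apply Rinv_0_lt_compat. lra. }
assert (/ (sqrt (f s) + sqrt (f t)) <= / sqrt m). { apply Rinv_le_contravar; lra. }
assert (0 <= / (sqrt (f s) + sqrt (f t))). { left. apply Rinv_0_lt_compat. lra. }
specialize (F s t). generalize (Rabs_pos (f s - f t)) (d_pos s t). intros.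
apply Rle_trans with (L * d s t * / sqrt m). nra.
replace (L * / sqrt m * d s t) with (L * d s t * / sqrt m) by ring. nra.
Qed.

Lemma bnd_sqrt f : isBnd f -> isBnd (fun t => sqrt (f t)).
Proof. intros [B [HB F]]. exists (sqrt B). split. apply sqrt_pos. intros t.
rewrite Rabs_right by (apply Rle_ge, sqrt_pos).
destruct (Rle_lt_dec 0 (f t)). apply sqrt_le_1_alt. specialize (F t). rewrite Rabs_right in F; lra.
rewrite sqrt_neg_0 by lra. apply sqrt_pos. Qed.

Lemma lipC_multR (f : T -> C) (g : T -> R) : isLipC f -> isLip g -> isBndC f -> isBnd g ->
  isLipC (fun t => Cmult (f t) (RtoC (g t))).
Proof. intros [L1 [H1 F]] [L2 [H2 G]] [B1 [HB1 Bf]] [B2 [HB2 Bg]]. exists (B1 * L2 + B2 * L1).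
split. nra.
intros s t.
replace (Cminus (Cmult (f s) (RtoC (g s))) (Cmult (f t) (RtoC (g t)))) with
  (Cplus (Cmult (f s) (RtoC (g s - g t))) (Cmult (RtoC (g t)) (Cminus (f s) (f t)))).
2: { destruct (f s), (f t). unfold Cminus, Cplus, Cmult, Copp, RtoC; simpl. f_equal; ring. }
eapply Rle_trans. apply Cmod_triangle. rewrite !Cmod_mult. rewrite !Cmod_R.
specialize (F s t). specialize (G s t). specialize (Bf s). specialize (Bg t).
generalize (Cmod_ge_0 (f s)) (Rabs_pos (g t)) (Cmod_ge_0 (Cminus (f s) (f t))) (Rabs_pos (g s - g t)) (d_pos s t). intros.
apply Rle_trans with (B1 * Rabs (g s - g t) + B2 * Cmod (Cminus (f s) (f t))). nra. nra.
Qed.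

Lemma bndC_multR (f : T -> C) (g : T -> R) : isBndC f -> isBnd g -> isBndC (fun t => Cmult (f t) (RtoC (g t))).
Proof. intros [B1 [HB1 Bf]] [B2 [HB2 Bg]]. exists (B1 * B2). split. nra. intros t.
rewrite Cmod_mult, Cmod_R. specialize (Bf t). specialize (Bg t).
generalize (Cmod_ge_0 (f t)) (Rabs_pos (g t)). intros. nra. Qed.

End Lip.

Arguments isLip {T} d f.
Arguments isBnd {T} f.
Arguments isLipC {T} d f.
Arguments isBndC {T} f.

Lemma lip_comp {T U : Type} (dT : T -> T -> R) (dU : U -> U -> R) (h : T -> U) (f : U -> R) M :
  0 <= M -> (forall s t, dU (h s) (h t) <= M * dT s t) -> isLip dU f -> isLip dT (fun t => f (h t)).
Proof. intros HM Hh [L [HL F]]. exists (L * M). split. nra. intros s t.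
eapply Rle_trans. apply F. specialize (Hh s t). rewrite Rmult_assoc. apply Rmult_le_compat_l; auto. Qed.

Lemma lipC_comp {T U : Type} (dT : T -> T -> R) (dU : U -> U -> R) (h : T -> U) (f : U -> C) M :
  0 <= M -> (forall s t, dU (h s) (h t) <= M * dT s t) -> isLipC dU f -> isLipC dT (fun t => f (h t)).
Proof. intros HM Hh [L [HL F]]. exists (L * M). split. nra. intros s t.
eapply Rle_trans. apply F. specialize (Hh s t). rewrite Rmult_assoc. apply Rmult_le_compat_l; auto. Qed.

Lemma bnd_comp {T U : Type} (h : T -> U) (f : U -> R) : isBnd f -> isBnd (fun t => f (h t)).
Proof. intros [B [HB F]]. exists B. split; auto. Qed.
Lemma bndC_comp {T U : Type} (h : T -> U) (f : U -> C) : isBndC f -> isBndC (fun t => f (h t)).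
Proof. intros [B [HB F]]. exists B. split; auto. Qed.

Definition d1 (s t : R) := Rabs (s - t).
Definition d2 (s t : R * R) := Rabs (fst s - fst t) + Rabs (snd s - snd t).
Lemma d1_pos s t : 0 <= d1 s t. Proof. apply Rabs_pos. Qed.
Lemma d2_pos s t : 0 <= d2 s t. Proof. unfold d2. generalize (Rabs_pos (fst s - fst t)) (Rabs_pos (snd s - snd t)). lra. Qed.
Definition clamp (a b u : R) := Rmax a (Rmin b u).

Lemma clamp_in a b u : a <= b -> a <= clamp a b u <= b.
Proof. intros. unfold clamp. unfold Rmax, Rmin. repeat destruct Rle_dec; lra. Qed.
Lemma clamp_id a b u : a <= u <= b -> clamp a b u = u.
Proof. intros. unfold clamp. unfold Rmax, Rmin. repeat destruct Rle_dec; lra. Qed.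
Lemma clamp_lip a b s t : a <= b -> Rabs (clamp a b s - clamp a b t) <= Rabs (s - t).
Proof. intros. unfold clamp. unfold Rmax, Rmin. repeat destruct Rle_dec; unfold Rabs; repeat destruct Rcase_abs; lra. Qed.
Lemma clamp_key a b s t : a <= b -> Rabs (clamp a b s - clamp a b t) * Rabs (s - clamp a b s) <= Rabs (s - t) * Rabs (s - t).
Proof. intros. unfold clamp. unfold Rmax, Rmin. repeat destruct Rle_dec; unfold Rabs; repeat destruct Rcase_abs; nra. Qed.

Lemma lip_clamp a b f L : a <= b -> (forall s t, a <= s <= b -> a <= t <= b -> Rabs (f s - f t) <= L * Rabs (s - t)) ->
  isLip d1 (fun u => f (clamp a b u)).
Proof. intros Hab H. exists (Rmax L 0). split. apply Rmax_r. intros s t. unfold d1.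
eapply Rle_trans. apply H; apply clamp_in; auto.
eapply Rle_trans. apply Rmult_le_compat_r. apply Rabs_pos. apply (Rmax_l L 0).
apply Rmult_le_compat_l. apply Rmax_r. apply clamp_lip; auto. Qed.

Lemma lipC_clamp a b (f : R -> C) L : a <= b -> (forall s t, a <= s <= b -> a <= t <= b -> Cmod (Cminus (f s) (f t)) <= L * Rabs (s - t)) ->
  isLipC d1 (fun u => f (clamp a b u)).
Proof. intros Hab H. exists (Rmax L 0). split. apply Rmax_r. intros s t. unfold d1.
eapply Rle_trans. apply H; apply clamp_in; auto.
eapply Rle_trans. apply Rmult_le_compat_r. apply Rabs_pos. apply (Rmax_l L 0).
apply Rmult_le_compat_l. apply Rmax_r. apply clamp_lip; auto. Qed.

Lemma bnd_clamp a b f L : a <= b -> (forall s t, a <= s <= b -> a <= t <= b -> Rabs (f s - f t) <= L * Rabs (s - t)) ->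
  isBnd (fun u => f (clamp a b u)).
Proof. intros Hab H. exists (Rabs (f a) + Rmax L 0 * (b - a)). split.
generalize (Rabs_pos (f a)) (Rmax_r L 0). nra.
intros u. generalize (clamp_in a b u Hab). intros Hc.
specialize (H (clamp a b u) a Hc ltac:(lra)).
replace (f (clamp a b u)) with (f a + (f (clamp a b u) - f a)) by ring.
eapply Rle_trans. apply Rabs_triang. apply Rplus_le_compat_l.
eapply Rle_trans. apply H. rewrite Rabs_right by lra.
generalize (Rmax_l L 0) (Rmax_r L 0). nra. Qed.

Lemma bndC_clamp a b (f : R -> C) L : a <= b -> (forall s t, a <= s <= b -> a <= t <= b -> Cmod (Cminus (f s) (f t)) <= L * Rabs (s - t)) ->
  isBndC (fun u => f (clamp a b u)).
Proof. intros Hab H. exists (Cmod (f a) + Rmax L 0 * (b - a)). split.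
generalize (Cmod_ge_0 (f a)) (Rmax_r L 0). nra.
intros u. generalize (clamp_in a b u Hab). intros Hc.
specialize (H (clamp a b u) a Hc ltac:(lra)).
replace (f (clamp a b u)) with (Cplus (f a) (Cminus (f (clamp a b u)) (f a))).
2:{ destruct (f a), (f (clamp a b u)). unfold Cplus, Cminus, Copp; simpl. f_equal; ring. }
eapply Rle_trans. apply Cmod_triangle. apply Rplus_le_compat_l.
eapply Rle_trans. apply H. rewrite Rabs_right by lra.
generalize (Rmax_l L 0) (Rmax_r L 0). nra. Qed.

Lemma lip_cont f : isLip d1 f -> forall t, continuous f t.
Proof. intros [L [HL F]] t. apply (cont_lipR f t L). intros s. apply F. Qed.
Lemma lipC_cont f : isLipC d1 f -> forall t, continuous f t.
Proof. intros [L [HL F]] t. apply (cont_lipC f t L). intros s. apply F. Qed.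

Definition extF a b (f f' : R -> R) (u : R) := f (clamp a b u) + f' (clamp a b u) * (u - clamp a b u).

Lemma ext_deriv a b f f' L : a <= b -> has_deriv_on f f' a b ->
  (forall s t, a <= s <= b -> a <= t <= b -> Rabs (f' s - f' t) <= L * Rabs (s - t)) ->
  forall u, is_derive (extF a b f f') u (f' (clamp a b u)).
Proof.
intros Hab Hd HL u. apply is_derive_Reals. intros eps Heps.
set (pu := clamp a b u).
assert (Hpu : a <= pu <= b) by (apply clamp_in; auto).
destruct (Hd pu Hpu (eps/2) ltac:(lra)) as [d1' [Hd1 Hdel]].
set (L' := Rmax L 0 + 1).
assert (HL' : 0 < L') by (unfold L'; generalize (Rmax_r L 0); lra).
assert (Hd2 : 0 < Rmin d1' (eps / (2 * L'))).
{ apply Rmin_pos. lra. apply Rdiv_lt_0_compat; lra. }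
exists (mkposreal _ Hd2). intros h Hh0 Hh. simpl in Hh.
assert (Hh1 : Rabs h < d1') by (eapply Rlt_le_trans; [apply Hh| apply Rmin_l]).
assert (Hh2 : Rabs h < eps / (2 * L')) by (eapply Rlt_le_trans; [apply Hh| apply Rmin_r]).
set (s := u + h). set (ps := clamp a b s).
assert (Hps : a <= ps <= b) by (apply clamp_in; auto).
assert (Hpl : Rabs (ps - pu) <= Rabs h).
{ replace h with (s - u) by (unfold s; ring). apply clamp_lip; auto. }
assert (Hk : Rabs (ps - pu) * Rabs (s - ps) <= Rabs h * Rabs h).
{ replace h with (s - u) by (unfold s; ring). apply clamp_key; auto. }
assert (E1 := Hdel ps Hps ltac:(lra)).
assert (E2 := HL ps pu Hps Hpu).
assert (Hah : 0 < Rabs h) by (apply Rabs_pos_lt; auto).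
assert (Key : Rabs (extF a b f f' (u + h) - extF a b f f' u - f' pu * h) < eps * Rabs h).
{ unfold extF. fold pu. fold s. fold ps.
  replace (f ps + f' ps * (s - ps) - (f pu + f' pu * (u - pu)) - f' pu * h) with
   ((f ps - f pu - f' pu * (ps - pu)) + (f' ps - f' pu) * (s - ps)) by (unfold s; ring).
  eapply Rle_lt_trans. apply Rabs_triang. rewrite Rabs_mult.
  assert (Rabs (f' ps - f' pu) * Rabs (s - ps) <= L' * (Rabs h * Rabs h)).
  { apply Rle_trans with (L' * Rabs (ps - pu) * Rabs (s - ps)).
    apply Rmult_le_compat_r. apply Rabs_pos. eapply Rle_trans. apply E2.
    apply Rmult_le_compat_r. apply Rabs_pos. unfold L'. generalize (Rmax_l L 0). lra.
    rewrite Rmult_assoc. apply Rmult_le_compat_l. lra. auto. }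
  assert (L' * (Rabs h * Rabs h) < eps / 2 * Rabs h).
  { replace (eps/2) with (L' * (eps / (2 * L'))) by (field; lra). rewrite Rmult_assoc.
    apply Rmult_lt_compat_l. lra. apply Rmult_lt_compat_r; auto. }
  assert (eps / 2 * Rabs (ps - pu) <= eps/2 * Rabs h) by (apply Rmult_le_compat_l; lra).
  lra. }
fold s in Key. unfold Rdiv.
replace ((extF a b f f' s - extF a b f f' u) * / h - f' pu) with
  ((extF a b f f' s - extF a b f f' u - f' pu * h) * / h) by (field; auto).
rewrite Rabs_mult, Rabs_inv.
apply (Rmult_lt_reg_r (Rabs h)). auto. rewrite Rmult_assoc, Rinv_l by lra. lra.
Qed.

Lemma extF_eq a b f f' u : a <= u <= b -> extF a b f f' u = f u.
Proof. intros. unfold extF. rewrite clamp_id by auto. ring. Qed.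
Lemma lip_from_deriv a b f f' L : a <= b -> has_deriv_on f f' a b ->
  (forall s t, a <= s <= b -> a <= t <= b -> Rabs (f' s - f' t) <= L * Rabs (s - t)) ->
  exists K, 0 <= K /\ forall s t, a <= s <= b -> a <= t <= b -> Rabs (f s - f t) <= K * Rabs (s - t).
Proof.
intros Hab Hd HL. destruct (bnd_clamp a b f' L Hab HL) as [B [HB FB]].
exists B. split; auto.
assert (W : forall s t, a <= s <= b -> a <= t <= b -> s <= t -> Rabs (f s - f t) <= B * Rabs (s - t)).
{ intros s t Hs Ht Hst.
  assert (Hi : is_RInt (fun u => f' (clamp a b u)) s t (minus (extF a b f f' t) (extF a b f f' s))).
  { apply (is_RInt_derive (V:=R_CompleteNormedModule)).
    - intros x _. apply (ext_deriv a b f f' L); auto.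
    - intros x _. apply lip_cont. apply (lip_clamp a b f' L); auto. }
  assert (Hn := norm_RInt_le_const (V:=R_NormedModule) _ _ _ _ B Hst (fun x _ => FB x) Hi).
  rewrite !extF_eq in Hn by auto.
  unfold norm, minus, plus, opp in Hn; simpl in Hn. unfold abs in Hn; simpl in Hn.
  rewrite Rabs_minus_sym. rewrite (Rabs_left1 (s - t)) by lra.
  replace (- (s - t)) with (t - s) by ring. rewrite Rmult_comm. exact Hn. }
intros s t Hs Ht. destruct (Rle_dec s t). auto.
rewrite Rabs_minus_sym, (Rabs_minus_sym s). apply W; auto; lra.
Qed.

Lemma deriv_unique a b F l f f' t : a < b -> a <= t <= b -> is_derive F t l -> has_deriv_on f f' a b ->
  (forall u, a <= u <= b -> F u = f u) -> l = f' t.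
Proof.
intros Hab Ht HF Hd Heq.
destruct (Req_dec l (f' t)) as [E|NE]; auto. exfalso.
set (e := Rabs (l - f' t)).
assert (He : 0 < e) by (apply Rabs_pos_lt; lra).
apply is_derive_Reals in HF.
destruct (HF (e/4) ltac:(lra)) as [dl Hdl].
destruct (Hd t Ht (e/4) ltac:(lra)) as [dl' [Hdl'0 Hdl']].
set (m := Rmin (Rmin dl dl') (b - a) / 2).
assert (Hm0 : 0 < m). { unfold m. apply Rdiv_lt_0_compat; [|lra]. apply Rmin_pos. apply Rmin_pos. apply cond_pos. auto. lra. }
assert (Hm1 : m < dl). { unfold m. generalize (Rmin_l (Rmin dl dl') (b - a)) (Rmin_l dl dl') (cond_pos dl). lra. }
assert (Hm2 : m < dl'). { unfold m. generalize (Rmin_l (Rmin dl dl') (b - a)) (Rmin_r dl dl'). lra. }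
assert (Hm3 : m <= (b - a)/2). { unfold m. generalize (Rmin_r (Rmin dl dl') (b - a)). lra. }
assert (exists h, h <> 0 /\ Rabs h = m /\ a <= t + h <= b) as [h [Hh0 [Hhm Hhin]]].
{ destruct (Rle_dec (t + m) b). exists m. split. lra. split. rewrite Rabs_right; lra. lra.
  exists (-m). split. lra. split. rewrite Rabs_Ropp, Rabs_right; lra. lra. }
assert (A1 := Hdl h Hh0 ltac:(lra)).
assert (A2 := Hdl' (t + h) Hhin ltac:(replace (t + h - t) with h by ring; lra)).
replace (t + h - t) with h in A2 by ring.
rewrite !Heq in A1 by lra.
assert (A3 : Rabs (f (t + h) - f t - l * h) < e / 4 * Rabs h).
{ replace (f (t + h) - f t - l * h) with (((f (t + h) - f t) / h - l) * h) by (field; auto).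
  rewrite Rabs_mult. apply Rmult_lt_compat_r. apply Rabs_pos_lt; auto. auto. }
assert (A4 : Rabs ((l - f' t) * h) < e / 2 * Rabs h).
{ replace ((l - f' t) * h) with (- (f (t + h) - f t - l * h) + (f (t + h) - f t - f' t * h)) by ring.
  eapply Rle_lt_trans. apply Rabs_triang. rewrite Rabs_Ropp. lra. }
rewrite Rabs_mult in A4. fold e in A4. nra.
Qed.
Lemma sinh_bound_pos p : 0 <= p -> 0 <= exp p - exp (- p) <= 2 * p * exp p.
Proof.
intros Hp. split.
- assert (exp (-p) <= exp p) by (apply exp_le_3 || (destruct (Req_dec p 0); [subst; rewrite Ropp_0; lra| left; apply exp_increasing; lra])). lra.
- assert (H := exp_ineq1_le (- (2 * p))).
  assert (E : exp (- p) = exp p * exp (- (2 * p))) by (rewrite <- exp_plus; f_equal; ring).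
  assert (0 < exp p) by apply exp_pos. nra.
Qed.

Lemma sinh_bound p : Rabs (exp p - exp (- p)) <= 2 * Rabs p * exp (Rabs p).
Proof.
destruct (Rle_dec 0 p).
- destruct (sinh_bound_pos p r). rewrite !Rabs_right by lra. lra.
- destruct (sinh_bound_pos (- p)) as [H1 H2]. lra. rewrite Ropp_involutive in *.
  rewrite Rabs_left1 by lra. rewrite (Rabs_left1 p) by lra.
  replace (- (exp p - exp (- p))) with (exp (- p) - exp p) by ring. lra.
Qed.

Lemma sin2_le_pos q : 0 <= q -> sin q * sin q <= q * q.
Proof.
intros Hq. destruct (Rle_dec 1 q).
- assert (H := sin2_cos2 q). unfold Rsqr in H. assert (0 <= cos q * cos q) by nra. nra.
- destruct (Req_dec q 0). subst. rewrite sin_0. lra.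
  assert (0 <= sin q). { apply sin_ge_0. lra. generalize PI2_1. lra. }
  assert (sin q < q) by (apply sin_lt_x; lra). nra.
Qed.

Lemma sin2_le q : sin q * sin q <= q * q.
Proof.
destruct (Rle_dec 0 q). apply sin2_le_pos; auto.
assert (H := sin2_le_pos (- q) ltac:(lra)). rewrite sin_neg in H. nra.
Qed.

Definition csinh (z : C) : C := Cmult (RtoC (/ 2)) (Cminus (cexp z) (cexp (Copp z))).

Lemma Cmod_fst_le (z : C) : Rabs (fst z) <= Cmod z.
Proof. destruct z as [a b]. unfold Cmod; simpl. rewrite <- sqrt_Rsqr_abs. apply sqrt_le_1_alt. unfold Rsqr. nra. Qed.

Lemma csinh_bound z : Cmod (csinh z) <= Cmod z * exp (Cmod z).
Proof.
destruct z as [a b].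
set (m := Cmod (a, b)).
assert (Hm : 0 <= m) by apply Cmod_ge_0.
assert (Ha : Rabs a <= m) by apply (Cmod_fst_le (a, b)).
assert (Em : m * m = a * a + b * b). { unfold m, Cmod; simpl. rewrite sqrt_sqrt; nra. }
assert (Ee : exp (Rabs a) <= exp m). { destruct (Req_dec (Rabs a) m). rewrite H; lra. left. apply exp_increasing. lra. }
assert (E1 : 1 <= exp m). { rewrite <- exp_0. destruct (Req_dec m 0). rewrite H; lra. left; apply exp_increasing; lra. }
assert (Hsh := sinh_bound a).
assert (Hsi := sin2_le b).
assert (Hci := sin2_cos2 b). unfold Rsqr in Hci.
unfold csinh, cexp, Cmod; simpl.
replace (- 0) with 0 by ring.
rewrite cos_neg, sin_neg.
set (sh := exp a - exp (- a)) in *.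
set (ch := exp a + exp (- a)).
assert (Ech : ch * ch = sh * sh + 4). { unfold ch, sh. assert (exp a * exp (- a) = 1) by (rewrite <- exp_plus; replace (a + - a) with 0 by ring; apply exp_0). nra. }
match goal with |- sqrt ?X <= _ => replace X with (/ 4 * (sh * sh) + sin b * sin b) end.
2: { unfold sh. replace (fst (/ 2, 0)) with (/2) by reflexivity. simpl. unfold ch in Ech.
     assert (Ech' : (exp a + exp (- a)) * (exp a + exp (- a)) = (exp a - exp (- a)) * (exp a - exp (- a)) + 4) by exact Ech.
     field_simplify. nra. }
rewrite <- (sqrt_Rsqr (m * exp m)) by (apply Rmult_le_pos; [lra| left; apply exp_pos]).
apply sqrt_le_1_alt. unfold Rsqr.
assert (Hsh2 : sh * sh <= 4 * (a * a) * (exp m * exp m)).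
{ assert (Rabs sh <= 2 * Rabs a * exp m).
  { eapply Rle_trans. apply Hsh. apply Rmult_le_compat_l. generalize (Rabs_pos a); lra. auto. }
  assert (sh * sh = Rabs sh * Rabs sh) by (rewrite <- Rabs_mult; rewrite Rabs_right; nra).
  assert (a * a = Rabs a * Rabs a) by (rewrite <- Rabs_mult; rewrite Rabs_right; nra).
  generalize (Rabs_pos sh) (Rabs_pos a) (exp_pos m). intros. nra. }
assert (b * b <= b * b * (exp m * exp m)). { assert (1 <= exp m * exp m) by nra. nra. }
nra.
Qed.

Lemma cexp_add z w : cexp (Cplus z w) = Cmult (cexp z) (cexp w).
Proof. destruct z as [a b], w as [a' b']. unfold cexp, Cplus, Cmult; simpl.
rewrite exp_plus, cos_plus, sin_plus. f_equal; ring. Qed.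

Lemma half2 : Cmult (RtoC (/ 2)) (RtoC 2) = RtoC 1.
Proof. unfold Cmult, RtoC; simpl. f_equal; field. Qed.

Lemma ccosh_sub h k : Cminus (ccosh (Cplus h k)) (ccosh (Cminus h k)) = Cmult (RtoC 2) (Cmult (csinh h) (csinh k)).
Proof.
unfold ccosh, csinh.
replace (Copp (Cplus h k)) with (Cplus (Copp h) (Copp k)) by ring.
replace (Cminus h k) with (Cplus h (Copp k)) by ring.
replace (Copp (Cplus h (Copp k))) with (Cplus (Copp h) k) by ring.
rewrite !cexp_add.
set (X := RtoC (/ 2)).
set (A := cexp h). set (B := cexp k). set (A' := cexp (Copp h)). set (B' := cexp (Copp k)).
transitivity (Cmult (Cmult X (RtoC 1)) (Cminus (Cplus (Cmult A B) (Cmult A' B')) (Cplus (Cmult A B') (Cmult A' B)))).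
{ ring. }
rewrite <- half2. fold X. ring.
Qed.

Lemma ccosh_diff a b : Cmod (Cminus (ccosh a) (ccosh b)) <= / 2 * Cmod (Cminus (Cmult a a) (Cmult b b)) * exp (Cmod a + Cmod b).
Proof.
set (X := RtoC (/ 2)).
set (h := Cmult X (Cplus a b)). set (k := Cmult X (Cminus a b)).
assert (E1 : Cplus h k = a). { unfold h, k. transitivity (Cmult (Cmult X (RtoC 2)) a). ring. unfold X. rewrite half2. ring. }
assert (E2 : Cminus h k = b). { unfold h, k. transitivity (Cmult (Cmult X (RtoC 2)) b). ring. unfold X. rewrite half2. ring. }
rewrite <- E1 at 1. rewrite <- E2 at 1. rewrite ccosh_sub.
rewrite !Cmod_mult, Cmod_R. rewrite Rabs_right by lra.
assert (HX : Cmod X = / 2). { unfold X. rewrite Cmod_R. rewrite Rabs_right; lra. }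
assert (Hh : Cmod h <= / 2 * (Cmod a + Cmod b)). { unfold h. rewrite Cmod_mult, HX. apply Rmult_le_compat_l. lra. apply Cmod_triangle. }
assert (Hk : Cmod k <= / 2 * (Cmod a + Cmod b)). { unfold k. rewrite Cmod_mult, HX. apply Rmult_le_compat_l. lra.
  unfold Cminus. eapply Rle_trans. apply Cmod_triangle. rewrite Cmod_opp. lra. }
assert (Hhk : Cmod h * Cmod k = / 4 * Cmod (Cminus (Cmult a a) (Cmult b b))).
{ rewrite <- Cmod_mult. replace (Cmult h k) with (Cmult (Cmult X X) (Cminus (Cmult a a) (Cmult b b))) by (unfold h, k; ring).
  rewrite Cmod_mult, Cmod_mult, HX. field. }
assert (S1 := csinh_bound h). assert (S2 := csinh_bound k).
assert (Ee : exp (Cmod h) * exp (Cmod k) <= exp (Cmod a + Cmod b)).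
{ rewrite <- exp_plus. destruct (Req_dec (Cmod h + Cmod k) (Cmod a + Cmod b)). rewrite H; lra. left. apply exp_increasing. lra. }
generalize (Cmod_ge_0 (csinh h)) (Cmod_ge_0 (csinh k)) (Cmod_ge_0 h) (Cmod_ge_0 k) (exp_pos (Cmod h)) (exp_pos (Cmod k)) (Cmod_ge_0 (Cminus (Cmult a a) (Cmult b b))).
intros.
apply Rle_trans with (2 * ((Cmod h * exp (Cmod h)) * (Cmod k * exp (Cmod k)))).
{ apply Rmult_le_compat_l. lra. apply Rmult_le_compat; auto. }
replace (2 * (Cmod h * exp (Cmod h) * (Cmod k * exp (Cmod k)))) with (2 * (Cmod h * Cmod k) * (exp (Cmod h) * exp (Cmod k))) by ring.
rewrite Hhk. replace (/ 2 * Cmod (Cminus (Cmult a a) (Cmult b b))) with (2 * (/ 4 * Cmod (Cminus (Cmult a a) (Cmult b b)))) by field.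
apply Rmult_le_compat_l. nra. auto.
Qed.
Section Main.
Variables (R0 : R) (c c' g' : R -> R) (lam : R -> C) (Lc' Llam : R).
Hypothesis hR0 : 0 < R0 < 1.
Hypothesis hcpos : forall r, R0 <= r <= 1 -> 0 < c r.
Hypothesis hcd : has_deriv_on c c' R0 1.
Hypothesis hc'L : forall s t, R0 <= s <= 1 -> R0 <= t <= 1 -> Rabs (c' s - c' t) <= Lc' * Rabs (s - t).
Hypothesis hgd : has_deriv_on (fun r => r / c r) g' R0 1.
Hypothesis hgpos : forall r, R0 <= r <= 1 -> 0 < g' r.
Hypothesis hlamL : forall s t, R0 <= s <= 1 -> R0 <= t <= 1 -> Cmod (Cminus (lam s) (lam t)) <= Llam * Rabs (s - t).

Let hR01 : R0 <= 1. Proof. lra. Qed.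

Definition p u := clamp R0 1 u.
Definition cE u := c (p u).
Definition c'E u := c' (p u).
Definition lamE u := lam (p u).
Definition CX := extF R0 1 c c'.
Definition dG u := (cE u - p u * c'E u) / (cE u * cE u).
Definition GE u := p u / cE u.

Lemma p_in u : R0 <= p u <= 1. Proof. apply clamp_in; lra. Qed.
Lemma p_id u : R0 <= u <= 1 -> p u = u. Proof. apply clamp_id. Qed.
Lemma p_p u : p (p u) = p u. Proof. apply p_id, p_in. Qed.

Lemma lip_p : isLip d1 p.
Proof. exists 1. split. lra. intros s t. unfold d1. rewrite Rmult_1_l. apply clamp_lip; lra. Qed.
Lemma bnd_p : isBnd p.
Proof. exists 1. split. lra. intros t. generalize (p_in t). intros. rewrite Rabs_right; lra. Qed.

Lemma c_lip : exists K, 0 <= K /\ forall s t, R0 <= s <= 1 -> R0 <= t <= 1 -> Rabs (c s - c t) <= K * Rabs (s - t).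
Proof. apply (lip_from_deriv R0 1 c c' Lc'); auto; lra. Qed.

Lemma lip_cE : isLip d1 cE.
Proof. destruct c_lip as [K [_ HK]]. apply (lip_clamp R0 1 c K); auto; lra. Qed.
Lemma bnd_cE : isBnd cE.
Proof. destruct c_lip as [K [_ HK]]. apply (bnd_clamp R0 1 c K); auto; lra. Qed.
Lemma lip_c'E : isLip d1 c'E.
Proof. apply (lip_clamp R0 1 c' Lc'); auto; lra. Qed.
Lemma bnd_c'E : isBnd c'E.
Proof. apply (bnd_clamp R0 1 c' Lc'); auto; lra. Qed.
Lemma lipC_lamE : isLipC d1 lamE.
Proof. apply (lipC_clamp R0 1 lam Llam); auto; lra. Qed.
Lemma bndC_lamE : isBndC lamE.
Proof. apply (bndC_clamp R0 1 lam Llam); auto; lra. Qed.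

Lemma cmin : exists m, 0 < m /\ forall u, m <= cE u.
Proof.
destruct (continuity_ab_min cE R0 1 hR01) as [mx [H1 H2]].
{ intros u _. apply continuity_pt_filterlim. apply lip_cont. apply lip_cE. }
exists (cE mx). split. unfold cE. apply hcpos, p_in.
intros u. replace (cE u) with (cE (p u)) by (unfold cE; rewrite p_p; auto). apply H1, p_in.
Qed.

Lemma CX_deriv u : is_derive CX u (c'E u).
Proof. apply (ext_deriv R0 1 c c' Lc'); auto; lra. Qed.

Lemma lip_dG : isLip d1 dG.
Proof.
destruct cmin as [m [Hm Hmin]].
unfold dG. apply lip_mult; auto using d1_pos.
- apply lip_minus; auto using d1_pos. apply lip_cE. apply lip_mult; auto using d1_pos, lip_p, lip_c'E, bnd_p, bnd_c'E.
- apply (lip_inv _ d1 d1_pos _ (m * m)). nra. intros t. specialize (Hmin t). nra.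
  apply lip_mult; auto using d1_pos, lip_cE, bnd_cE.
- apply bnd_minus. apply bnd_cE. apply bnd_mult; auto using bnd_p, bnd_c'E.
- apply (bnd_inv _ _ (m * m)). nra. intros t. specialize (Hmin t). nra.
Qed.
Lemma bnd_dG : isBnd dG.
Proof.
destruct cmin as [m [Hm Hmin]].
unfold dG. apply bnd_mult.
- apply bnd_minus. apply bnd_cE. apply bnd_mult; auto using bnd_p, bnd_c'E.
- apply (bnd_inv _ _ (m * m)). nra. intros t. specialize (Hmin t). nra.
Qed.

Lemma dG_p u : dG (p u) = dG u.
Proof. unfold dG, cE, c'E. rewrite p_p. auto. Qed.

Lemma G_deriv u : R0 <= u <= 1 -> is_derive (fun t => t / CX t) u (dG u).
Proof.
intros Hu.
assert (HC : CX u = cE u). { unfold CX, cE. rewrite extF_eq by auto. rewrite p_id; auto. }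
assert (Hp : 0 < cE u). { unfold cE. apply hcpos, p_in. }
replace (dG u) with ((1 * CX u - u * c'E u) / CX u ^ 2).
apply is_derive_div. apply (is_derive_id (K:=R_AbsRing)). apply CX_deriv. lra.
rewrite HC. unfold dG. rewrite p_id by auto. field. lra.
Qed.

Lemma dG_eq u : R0 <= u <= 1 -> dG u = g' u.
Proof.
intros Hu. apply (deriv_unique R0 1 (fun t => t / CX t) _ (fun r => r / c r) g' u); auto.
lra. apply G_deriv; auto.
intros v Hv. unfold CX. rewrite extF_eq; auto.
Qed.

Lemma dGmin : exists m, 0 < m /\ forall u, m <= dG u.
Proof.
destruct (continuity_ab_min dG R0 1 hR01) as [mx [H1 H2]].
{ intros u _. apply continuity_pt_filterlim. apply lip_cont. apply lip_dG. }
exists (dG mx). split. rewrite dG_eq; auto.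
intros u. replace (dG u) with (dG (p u)) by apply dG_p. apply H1. apply p_in.
Qed.

Lemma lip_GE : isLip d1 GE.
Proof.
destruct cmin as [m [Hm Hmin]].
unfold GE. apply lip_mult; auto using d1_pos, lip_p, bnd_p.
- apply (lip_inv _ d1 d1_pos _ m); auto. apply lip_cE.
- apply (bnd_inv _ _ m); auto.
Qed.
Lemma bnd_GE : isBnd GE.
Proof.
destruct cmin as [m [Hm Hmin]].
unfold GE. apply bnd_mult; auto using bnd_p. apply (bnd_inv _ _ m); auto.
Qed.
Lemma GEmin : exists m, 0 < m /\ forall u, m <= GE u.
Proof.
destruct bnd_cE as [B [HB FB]].
destruct cmin as [m [Hm Hmin]].
exists (R0 / B). assert (0 < B). { specialize (Hmin 0). specialize (FB 0). rewrite Rabs_right in FB; lra. }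
split. apply Rdiv_lt_0_compat; lra.
intros u. unfold GE. specialize (FB u). specialize (Hmin u). generalize (p_in u). intros.
rewrite Rabs_right in FB by lra.
unfold Rdiv. apply Rmult_le_compat. lra. left. apply Rinv_0_lt_compat; lra. lra.
apply Rinv_le_contravar; lra.
Qed.

Definition D x u := RInt (fun s => dG ((u - x) * s + x)) 0 1.

Lemma ex_D x u : ex_RInt (fun s => dG ((u - x) * s + x)) 0 1.
Proof.
apply (ex_RInt_continuous (V:=R_CompleteNormedModule)). intros z _. apply lip_cont.
apply (lip_comp d1 d1 (fun s => (u - x) * s + x) dG (Rabs (u - x))). apply Rabs_pos.
intros s t. unfold d1. replace ((u - x) * s + x - ((u - x) * t + x)) with ((u - x) * (s - t)) by ring.
rewrite Rabs_mult. lra. apply lip_dG.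
Qed.

Lemma D_ge : exists m, 0 < m /\ forall x u, m <= D x u.
Proof.
destruct dGmin as [m [Hm Hmin]]. exists m. split; auto. intros x u.
unfold D. replace m with (RInt (fun _ => m) 0 1).
apply RInt_le. lra. apply (ex_RInt_const (V:=R_NormedModule)). apply ex_D. intros; apply Hmin.
rewrite RInt_const. unfold scal; simpl. unfold mult; simpl. ring.
Qed.

Lemma lip_D : isLip d2 (fun z => D (fst z) (snd z)).
Proof.
destruct lip_dG as [L [HL FL]]. exists L. split; auto. intros [x u] [x' u']. simpl.
unfold D. rewrite <- (RInt_minus (V:=R_CompleteNormedModule)) by apply ex_D.
replace (L * d2 (x, u) (x', u')) with ((1 - 0) * (L * d2 (x, u) (x', u'))) by ring.
apply abs_RInt_le_const. lra.
apply (ex_RInt_minus (V:=R_NormedModule)); apply ex_D.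
intros s Hs. unfold minus, plus, opp; simpl. fold (dG ((u' - x') * s + x')).
replace (dG ((u - x) * s + x) + - dG ((u' - x') * s + x')) with (dG ((u - x) * s + x) - dG ((u' - x') * s + x')) by ring.
eapply Rle_trans. apply FL. apply Rmult_le_compat_l; auto. unfold d1, d2; simpl.
replace ((u - x) * s + x - ((u' - x') * s + x')) with ((1 - s) * (x - x') + s * (u - u')) by ring.
eapply Rle_trans. apply Rabs_triang. rewrite !Rabs_mult. rewrite (Rabs_right s), (Rabs_right (1 - s)) by lra.
generalize (Rabs_pos (x - x')) (Rabs_pos (u - u')). nra.
Qed.

Lemma bnd_D : isBnd (fun z => D (fst z) (snd z)).
Proof.
destruct bnd_dG as [B [HB FB]]. exists B. split; auto. intros [x u]. simpl. unfold D.
replace B with ((1 - 0) * B) by ring. apply abs_RInt_le_const. lra. apply ex_D. intros; apply FB.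
Qed.

Lemma G_ident x u : R0 <= x <= 1 -> R0 <= u <= 1 -> GE u - GE x = (u - x) * D x u.
Proof.
intros Hx Hu.
assert (H1 : is_RInt dG x u (minus (u / CX u) (x / CX x))).
{ apply (is_RInt_derive (V:=R_CompleteNormedModule) (fun t => t / CX t) dG).
  - intros t Ht. apply G_deriv. generalize (Rmin_l x u) (Rmin_r x u) (Rmax_l x u) (Rmax_r x u).
    unfold Rmin, Rmax in *. destruct Rle_dec; lra.
  - intros t _. apply lip_cont, lip_dG. }
assert (H1' : is_RInt dG ((u - x) * 0 + x) ((u - x) * 1 + x) (minus (u / CX u) (x / CX x))).
{ replace ((u - x) * 0 + x) with x by ring. replace ((u - x) * 1 + x) with u by ring. exact H1. }
assert (H2 := is_RInt_comp_lin (V:=R_NormedModule) dG (u - x) x 0 1 _ H1').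
apply (is_RInt_unique (V:=R_CompleteNormedModule)) in H2.
rewrite (RInt_scal (V:=R_CompleteNormedModule)) in H2 by apply ex_D.
unfold D. unfold scal in H2; simpl in H2. unfold mult in H2; simpl in H2. rewrite H2.
unfold minus, plus, opp; simpl. unfold GE, CX, cE. rewrite !extF_eq by auto. rewrite !p_id by auto. ring.
Qed.

Lemma prod_norm_C (z : C) : prod_norm (K:=R_AbsRing) (U:=R_NormedModule) (V:=R_NormedModule) z = Cmod z.
Proof. destruct z as [a b]. unfold prod_norm, Cmod; simpl.
 unfold norm; simpl; unfold abs; simpl. f_equal. assert (Rabs a * Rabs a = a*a) by (rewrite <- Rabs_mult; apply Rabs_right; nra). assert (Rabs b * Rabs b = b*b) by (rewrite <- Rabs_mult; apply Rabs_right; nra). nra. Qed.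

Lemma RIntC_bound (f : R -> C) a b M : a <= b -> (forall t, continuous f t) ->
  (forall t, a <= t <= b -> Cmod (f t) <= M) -> Cmod (RInt (V:=C_R_CompleteNormedModule) f a b) <= (b - a) * M.
Proof.
intros Hab Hc HM.
assert (Hi : is_RInt f a b (RInt (V:=C_R_CompleteNormedModule) f a b)).
{ apply (RInt_correct (V:=C_R_CompleteNormedModule)). apply (ex_RInt_continuous (V:=C_R_CompleteNormedModule)). intros; auto. }
assert (H := norm_RInt_le_const (V:=C_R_NormedModule) f a b (RInt (V:=C_R_CompleteNormedModule) f a b) M Hab).
unfold norm in H; simpl in H. rewrite !prod_norm_C in H. setoid_rewrite prod_norm_C in H. apply H; auto.
Qed.

Lemma RIntC_minus_bound (f g : R -> C) a b M : a <= b -> (forall t, continuous f t) -> (forall t, continuous g t) ->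
  (forall t, a <= t <= b -> Cmod (Cminus (f t) (g t)) <= M) ->
  Cmod (Cminus (RInt (V:=C_R_CompleteNormedModule) f a b) (RInt (V:=C_R_CompleteNormedModule) g a b)) <= (b - a) * M.
Proof.
intros Hab Hf Hg HM.
assert (Hi1 : is_RInt f a b (RInt (V:=C_R_CompleteNormedModule) f a b)).
{ apply (RInt_correct (V:=C_R_CompleteNormedModule)). apply (ex_RInt_continuous (V:=C_R_CompleteNormedModule)). intros; auto. }
assert (Hi2 : is_RInt g a b (RInt (V:=C_R_CompleteNormedModule) g a b)).
{ apply (RInt_correct (V:=C_R_CompleteNormedModule)). apply (ex_RInt_continuous (V:=C_R_CompleteNormedModule)). intros; auto. }
assert (Hi := is_RInt_minus (V:=C_R_NormedModule) f g a b _ _ Hi1 Hi2).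
assert (H := norm_RInt_le_const (V:=C_R_NormedModule) (fun y => minus (f y) (g y)) a b (minus (RInt (V:=C_R_CompleteNormedModule) f a b) (RInt (V:=C_R_CompleteNormedModule) g a b)) M Hab).
unfold norm in H; simpl in H. rewrite !prod_norm_C in H. setoid_rewrite prod_norm_C in H. apply H; auto.
Qed.

Lemma lift_snd f : isLip d1 f -> isLip d2 (fun z : R * R => f (snd z)).
Proof. intros. apply (lip_comp d2 d1 snd f 1). lra. intros s t. unfold d1, d2.
generalize (Rabs_pos (fst s - fst t)). lra. auto. Qed.
Lemma lift_fst f : isLip d1 f -> isLip d2 (fun z : R * R => f (fst z)).
Proof. intros. apply (lip_comp d2 d1 fst f 1). lra. intros s t. unfold d1, d2.
generalize (Rabs_pos (snd s - snd t)). lra. auto. Qed.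
Lemma liftC_snd f : isLipC d1 f -> isLipC d2 (fun z : R * R => f (snd z)).
Proof. intros. apply (lipC_comp d2 d1 snd f 1). lra. intros s t. unfold d1, d2.
generalize (Rabs_pos (fst s - fst t)). lra. auto. Qed.

Definition Sq z := D (fst z) (snd z) * (GE (snd z) + GE (fst z)).
Definition k z := 2 * p (snd z) * / (cE (snd z) * cE (snd z)) * / sqrt (Sq z).
Definition Kc z := Cmult (lamE (snd z)) (RtoC (k z)).

Lemma Sq_min : exists m, 0 < m /\ forall z, m <= Sq z.
Proof. destruct D_ge as [m1 [H1 F1]]. destruct GEmin as [m2 [H2 F2]].
exists (m1 * (m2 + m2)). split. nra. intros [x u]. unfold Sq; simpl.
specialize (F1 x u). generalize (F2 u) (F2 x). intros. apply Rmult_le_compat; lra. Qed.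

Lemma lip_Sq : isLip d2 Sq.
Proof. unfold Sq. apply lip_mult; auto using d2_pos, lip_D, bnd_D.
apply lip_plus; auto using d2_pos. apply lift_snd, lip_GE. apply lift_fst, lip_GE.
apply bnd_plus; apply bnd_comp; apply bnd_GE. Qed.

Lemma lip_k : isLip d2 k.
Proof.
destruct cmin as [m [Hm Hmin]]. destruct Sq_min as [ms [Hms Fms]].
assert (Hs : forall z, sqrt ms <= sqrt (Sq z)) by (intros; apply sqrt_le_1_alt; auto).
assert (0 < sqrt ms) by (apply sqrt_lt_R0; auto).
unfold k.
assert (A1 : isLip d2 (fun z : R * R => 2 * p (snd z))).
{ apply lip_mult; auto using d2_pos, lip_const, bnd_const. apply lift_snd, lip_p. apply bnd_comp, bnd_p. }
assert (A2 : isBnd (fun z : R * R => 2 * p (snd z))).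
{ apply bnd_mult. apply bnd_const. apply bnd_comp, bnd_p. }
assert (A3 : isLip d2 (fun z : R * R => / (cE (snd z) * cE (snd z)))).
{ apply (lip_inv _ d2 d2_pos _ (m * m)). nra. intros t. specialize (Hmin (snd t)). nra.
  apply lip_mult; auto using d2_pos. apply lift_snd, lip_cE. apply lift_snd, lip_cE. apply bnd_comp, bnd_cE. apply bnd_comp, bnd_cE. }
assert (A4 : isBnd (fun z : R * R => / (cE (snd z) * cE (snd z)))).
{ apply (bnd_inv _ _ (m * m)). nra. intros t. specialize (Hmin (snd t)). nra. }
apply lip_mult; auto using d2_pos.
apply lip_mult; auto using d2_pos.
apply (lip_inv _ d2 d2_pos _ (sqrt ms)); auto. apply (lip_sqrt _ d2 d2_pos _ ms); auto. apply lip_Sq.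
apply bnd_mult; auto.
apply (bnd_inv _ _ (sqrt ms)); auto.
Qed.

Lemma bnd_k : isBnd k.
Proof.
destruct cmin as [m [Hm Hmin]]. destruct Sq_min as [ms [Hms Fms]].
assert (Hs : forall z, sqrt ms <= sqrt (Sq z)) by (intros; apply sqrt_le_1_alt; auto).
assert (0 < sqrt ms) by (apply sqrt_lt_R0; auto).
unfold k. apply bnd_mult. apply bnd_mult. apply bnd_mult. apply bnd_const. apply bnd_comp, bnd_p.
apply (bnd_inv _ _ (m * m)). nra. intros t. specialize (Hmin (snd t)). nra.
apply (bnd_inv _ _ (sqrt ms)); auto.
Qed.

Lemma lip_Kc : isLipC d2 Kc.
Proof. unfold Kc. apply lipC_multR; auto using d2_pos, lip_k, bnd_k.
apply liftC_snd, lipC_lamE. apply bndC_comp, bndC_lamE. Qed.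
Lemma bnd_Kc : isBndC Kc.
Proof. unfold Kc. apply bndC_multR; auto using bnd_k. apply bndC_comp, bndC_lamE. Qed.

Definition q t := clamp 0 1 t.
Definition Phi r x t := (x, x + (r - x) * (q t * q t)).
Definition J r x := RInt (V:=C_R_CompleteNormedModule) (fun t => Kc (Phi r x t)) 0 1.
Definition I r x := Cmult (RtoC (sqrt (r - x))) (J r x).

Lemma q_in t : 0 <= q t <= 1. Proof. apply clamp_in; lra. Qed.

Lemma cont_KPhi r x t : continuous (fun t => Kc (Phi r x t)) t.
Proof.
apply lipC_cont. apply (lipC_comp d1 d2 (Phi r x) Kc (2 * Rabs (r - x))).
generalize (Rabs_pos (r - x)); lra.
intros s t'. unfold d1, d2, Phi; simpl.
replace (x - x) with 0 by ring. rewrite Rabs_R0.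
replace (x + (r - x) * (q s * q s) - (x + (r - x) * (q t' * q t'))) with ((r - x) * ((q s - q t') * (q s + q t'))) by ring.
rewrite !Rabs_mult.
assert (Rabs (q s - q t') <= Rabs (s - t')) by (apply clamp_lip; lra).
assert (Rabs (q s + q t') <= 2) by (generalize (q_in s) (q_in t'); intros; rewrite Rabs_right; lra).
generalize (Rabs_pos (r - x)) (Rabs_pos (q s - q t')) (Rabs_pos (q s + q t')) (Rabs_pos (s - t')). intros.
assert (Rabs (q s - q t') * Rabs (q s + q t') <= 2 * Rabs (s - t')) by nra.
assert (Rabs (r - x) * (Rabs (q s - q t') * Rabs (q s + q t')) <= Rabs (r - x) * (2 * Rabs (s - t'))) by (apply Rmult_le_compat_l; auto).
lra.
apply lip_Kc.
Qed.

Lemma J_lip : exists L, 0 <= L /\ forall r x r' x', Cmod (Cminus (J r x) (J r' x')) <= L * (Rabs (r - r') + Rabs (x - x')).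
Proof.
destruct lip_Kc as [L [HL FL]]. exists (3 * L). split. lra. intros r x r' x'.
unfold J. replace (3 * L * (Rabs (r - r') + Rabs (x - x'))) with ((1 - 0) * (L * (3 * (Rabs (r - r') + Rabs (x - x'))))) by ring.
apply RIntC_minus_bound. lra. apply cont_KPhi. apply cont_KPhi.
intros t Ht. eapply Rle_trans. apply FL. apply Rmult_le_compat_l; auto. unfold d2, Phi; simpl.
replace (x + (r - x) * (q t * q t) - (x' + (r' - x') * (q t * q t))) with
  ((x - x') * (1 - q t * q t) + (r - r') * (q t * q t)) by ring.
generalize (q_in t). intros Hq.
assert (0 <= q t * q t <= 1) by nra.
eapply Rle_trans. apply Rplus_le_compat_l. apply Rabs_triang. rewrite !Rabs_mult.
rewrite (Rabs_right (1 - q t * q t)) by lra. rewrite (Rabs_right (q t)) by lra.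
generalize (Rabs_pos (x - x')) (Rabs_pos (r - r')). nra.
Qed.

Lemma J_bnd : exists B, 0 <= B /\ forall r x, Cmod (J r x) <= B.
Proof.
destruct bnd_Kc as [B [HB FB]]. exists B. split; auto. intros r x. unfold J.
replace B with ((1 - 0) * B) by ring. apply RIntC_bound. lra. apply cont_KPhi. intros; apply FB.
Qed.

Definition psi r x u := sqrt ((u - x) / (r - x)).
Definition dpsi r x u := / (2 * sqrt ((u - x) / (r - x))) * / (r - x).

Lemma H_ident r x u : R0 <= x -> x < u -> u <= r -> r <= 1 ->
  sqrt (r - x) * dpsi r x u * k (x, u) = Hfun c u x.
Proof.
intros Hx Hxu Hur Hr.
assert (Hu : R0 <= u <= 1) by lra. assert (Hx' : R0 <= x <= 1) by lra.
assert (Ecu : cE u = c u) by (unfold cE; rewrite p_id; auto).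
assert (Ecx : cE x = c x) by (unfold cE; rewrite p_id; auto).
assert (cu : 0 < c u) by auto. assert (cx : 0 < c x) by auto.
assert (EGu : GE u = u / c u) by (unfold GE; rewrite Ecu, p_id; auto).
assert (EGx : GE x = x / c x) by (unfold GE; rewrite Ecx, p_id; auto).
destruct D_ge as [mD [HmD FD]]. assert (HD := FD x u).
assert (Gid := G_ident x u Hx' Hu).
assert (Gx0 : 0 < GE x) by (rewrite EGx; apply Rdiv_lt_0_compat; lra).
assert (Gu0 : 0 < GE u) by (rewrite EGu; apply Rdiv_lt_0_compat; lra).
set (W := GE u * GE u - GE x * GE x).
assert (EW : W = (u - x) * Sq (x, u)). { unfold W, Sq; simpl. transitivity ((GE u - GE x) * (GE u + GE x)). ring. rewrite Gid. ring. }
assert (HSq : 0 < Sq (x, u)). { unfold Sq; simpl. apply Rmult_lt_0_compat; lra. }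
assert (HW : 0 < W) by (rewrite EW; apply Rmult_lt_0_compat; lra).
unfold Hfun.
assert (E1 : 1 - (x * c u / (u * c x)) ^ 2 = W / (GE u * GE u)).
{ unfold W. rewrite EGu, EGx. field. repeat split; lra. }
rewrite E1. rewrite sqrt_div_alt by nra. rewrite sqrt_square by lra.
unfold dpsi, k; simpl. rewrite p_id by auto. rewrite Ecu.
rewrite sqrt_div_alt by lra.
assert (Hsw : sqrt W = sqrt (u - x) * sqrt (Sq (x, u))) by (rewrite EW; apply sqrt_mult; lra).
rewrite Hsw. rewrite EGu.
assert (0 < sqrt (u - x)) by (apply sqrt_lt_R0; lra).
assert (0 < sqrt (r - x)) by (apply sqrt_lt_R0; lra).
assert (0 < sqrt (Sq (x, u))) by (apply sqrt_lt_R0; lra).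
assert (Ers : r - x = sqrt (r - x) * sqrt (r - x)) by (rewrite sqrt_sqrt; lra).
generalize dependent (sqrt (r - x)). generalize dependent (sqrt (u - x)). generalize dependent (sqrt (Sq (x, u))).
intros. rewrite Ers. field. repeat split; lra.
Qed.

Lemma I_gen r x : tri R0 1 r x ->
  is_RInt_gen (fun u => Cmult (lam u) (RtoC (Hfun c u x))) (at_right x) (at_point r) (I r x).
Proof.
intros [Hx [Hxr Hr]].
set (F := fun t => Kc (Phi r x t)).
set (f := fun u => Cmult (lam u) (RtoC (Hfun c u x))).
assert (Fc : forall t, continuous F t) by (intros; apply cont_KPhi).
destruct bnd_Kc as [BK [HBK FBK]].
assert (Main : forall a, x < a < r -> is_RInt f a r (Cmult (RtoC (sqrt (r - x))) (RInt (V:=C_R_CompleteNormedModule) F (psi r x a) 1))).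
{ intros a Ha.
  assert (H1 := is_RInt_comp (V:=C_R_CompleteNormedModule) F (psi r x) (dpsi r x) a r).
  replace (psi r x r) with 1 in H1.
  2: { unfold psi. replace ((r - x) / (r - x)) with 1 by (field; lra). rewrite sqrt_1. auto. }
  assert (H2 : is_RInt (fun y => scal (sqrt (r - x)) (scal (dpsi r x y) (F (psi r x y)))) a r
       (scal (sqrt (r - x)) (RInt (V:=C_R_CompleteNormedModule) F (psi r x a) 1))).
  { apply (is_RInt_scal (V:=C_R_NormedModule)). apply H1.
    - intros; apply Fc.
    - intros u Hu. rewrite Rmin_left in Hu by lra. rewrite Rmax_right in Hu by lra. split.
      + unfold psi, dpsi. auto_derive. apply Rmult_lt_0_compat. lra. apply Rinv_0_lt_compat; lra.
        rewrite Rmult_1_l. unfold Rminus, Rdiv. ring.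
      + apply (ex_derive_continuous (K:=R_AbsRing) (V:=R_NormedModule)). unfold dpsi. auto_derive. split.
        apply Rmult_lt_0_compat. lra. apply Rinv_0_lt_compat; lra. split; auto.
        assert (0 < sqrt ((u + - x) * / (r - x))). { apply sqrt_lt_R0. apply Rmult_lt_0_compat. lra. apply Rinv_0_lt_compat; lra. }
        lra. }
  rewrite Cscal in H2.
  apply (is_RInt_ext (V:=C_R_NormedModule) _ f) in H2. exact H2.
  intros u Hu. rewrite Rmin_left in Hu by lra. rewrite Rmax_right in Hu by lra.
  rewrite !Cscal. unfold F, f, Kc, Phi. simpl.
  assert (Hpsi : 0 <= psi r x u <= 1).
  { unfold psi. split. apply sqrt_pos. rewrite <- sqrt_1. apply sqrt_le_1_alt.
    apply (Rmult_le_reg_r (r - x)). lra. unfold Rdiv. rewrite Rmult_assoc, Rinv_l by lra. lra. }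
  assert (Eq : q (psi r x u) = psi r x u) by (apply clamp_id; auto).
  rewrite Eq.
  assert (Eu : x + (r - x) * (psi r x u * psi r x u) = u).
  { unfold psi. rewrite sqrt_sqrt. field. lra. apply Rdiv_le_0_compat; lra. }
  rewrite Eu. unfold lamE. rewrite p_id by lra.
  rewrite <- (H_ident r x u) by lra.
  destruct (lam u). unfold Cmult, RtoC; simpl. f_equal; ring. }
intros P HP. assert (HP2 := locally_norm_le_locally (K:=R_AbsRing) (V:=prod_NormedModule R_AbsRing R_NormedModule R_NormedModule) (I r x) P HP). destruct HP2 as [eps Heps].
set (del := eps / (BK + 1)).
assert (Hdel : 0 < del) by (unfold del; apply Rdiv_lt_0_compat; [apply cond_pos| lra]).
assert (Hd0 : 0 < Rmin (r - x) ((r - x) * (del * del))).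
{ apply Rmin_pos. lra. apply Rmult_lt_0_compat; nra. }
apply (Filter_prod _ _ _ (fun a => x < a < x + Rmin (r - x) ((r - x) * (del * del))) (fun b => b = r)).
- exists (mkposreal _ Hd0). intros y Hy Hxy. simpl in Hy. unfold ball in Hy; simpl in Hy. unfold AbsRing_ball, abs, minus, plus, opp in Hy; simpl in Hy.
  rewrite Rabs_right in Hy by lra. split; lra.
- reflexivity.
- intros a b Ha Hb. subst b. simpl.
  assert (Ha1 : a - x < r - x) by (generalize (Rmin_l (r - x) ((r - x) * (del * del))); lra).
  assert (Ha2 : a - x < (r - x) * (del * del)) by (generalize (Rmin_r (r - x) ((r - x) * (del * del))); lra).
  exists (Cmult (RtoC (sqrt (r - x))) (RInt (V:=C_R_CompleteNormedModule) F (psi r x a) 1)).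
  split. apply Main. lra.
  apply Heps. unfold ball_norm. unfold norm; simpl. rewrite prod_norm_C.
  set (tau := psi r x a).
  assert (Htau : 0 <= tau < del).
  { unfold tau, psi. split. apply sqrt_pos. rewrite <- (sqrt_square del) by lra.
    apply sqrt_lt_1_alt. split. apply Rdiv_le_0_compat; lra.
    apply (Rmult_lt_reg_r (r - x)). lra. unfold Rdiv. rewrite Rmult_assoc, Rinv_l by lra. lra. }
  assert (Ch : Cplus (RInt (V:=C_R_CompleteNormedModule) F 0 tau) (RInt (V:=C_R_CompleteNormedModule) F tau 1) = J r x).
  { unfold J. apply (RInt_Chasles (V:=C_R_CompleteNormedModule));
    apply (ex_RInt_continuous (V:=C_R_CompleteNormedModule)); intros; apply Fc. }
  unfold I. rewrite <- Ch.
  change (Cmod (Cminus (Cmult (RtoC (sqrt (r - x))) (RInt (V:=C_R_CompleteNormedModule) F tau 1))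
     (Cmult (RtoC (sqrt (r - x))) (Cplus (RInt (V:=C_R_CompleteNormedModule) F 0 tau) (RInt (V:=C_R_CompleteNormedModule) F tau 1)))) < eps).
  replace (Cminus (Cmult (RtoC (sqrt (r - x))) (RInt (V:=C_R_CompleteNormedModule) F tau 1))
     (Cmult (RtoC (sqrt (r - x))) (Cplus (RInt (V:=C_R_CompleteNormedModule) F 0 tau) (RInt (V:=C_R_CompleteNormedModule) F tau 1))))
   with (Copp (Cmult (RtoC (sqrt (r - x))) (RInt (V:=C_R_CompleteNormedModule) F 0 tau))) by ring.
  rewrite Cmod_opp, Cmod_mult, Cmod_R. rewrite Rabs_right by (apply Rle_ge, sqrt_pos).
  assert (Hs1 : sqrt (r - x) <= 1). { rewrite <- sqrt_1. apply sqrt_le_1_alt. lra. }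
  assert (Hb := RIntC_bound F 0 tau BK ltac:(lra) Fc (fun t _ => FBK _)).
  assert (HBd : (tau - 0) * BK < eps).
  { apply Rle_lt_trans with (del * BK). apply Rmult_le_compat_r; lra.
    unfold del. apply Rlt_le_trans with (eps / (BK + 1) * (BK + 1)). apply Rmult_lt_compat_l. auto. lra.
    right. field. lra. }
  generalize (Cmod_ge_0 (RInt (V:=C_R_CompleteNormedModule) F 0 tau)) (sqrt_pos (r - x)). intros. nra.
Qed.

Lemma II r x : x < r -> Cmult (I r x) (I r x) = Cmult (RtoC (r - x)) (Cmult (J r x) (J r x)).
Proof. intros H. unfold I.
replace (RtoC (r - x)) with (Cmult (RtoC (sqrt (r - x))) (RtoC (sqrt (r - x)))).
ring. unfold Cmult, RtoC; simpl. rewrite sqrt_sqrt by lra. f_equal; ring. Qed.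

Lemma I_bnd : exists B, 0 <= B /\ forall r x, x < r <= x + 1 -> Cmod (I r x) <= B.
Proof. destruct J_bnd as [B [HB FB]]. exists B. split; auto. intros r x H.
unfold I. rewrite Cmod_mult, Cmod_R. rewrite Rabs_right by (apply Rle_ge, sqrt_pos).
assert (sqrt (r - x) <= 1) by (rewrite <- sqrt_1; apply sqrt_le_1_alt; lra).
generalize (sqrt_pos (r - x)) (Cmod_ge_0 (J r x)) (FB r x). intros. nra. Qed.

Lemma I_lip : exists L, forall r x r' x', tri R0 1 r x -> tri R0 1 r' x' ->
  Cmod (Cminus (ccosh (I r x)) (ccosh (I r' x'))) <= L * Rmax (Rabs (r - r')) (Rabs (x - x')).
Proof.
destruct J_bnd as [BJ [HBJ FBJ]]. destruct J_lip as [LJ [HLJ FLJ]]. destruct I_bnd as [BI [HBI FBI]].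
exists (/ 2 * (BJ * BJ + 2 * BJ * LJ) * exp (BI + BI) * 2).
intros r x r' x' [H1 [H2 H3]] [H1' [H2' H3']].
set (dd := Rabs (r - r') + Rabs (x - x')).
assert (Hdd : dd <= 2 * Rmax (Rabs (r - r')) (Rabs (x - x'))).
{ unfold dd. generalize (Rmax_l (Rabs (r - r')) (Rabs (x - x'))) (Rmax_r (Rabs (r - r')) (Rabs (x - x'))). lra. }
assert (Hdd0 : 0 <= dd) by (unfold dd; generalize (Rabs_pos (r - r')) (Rabs_pos (x - x')); lra).
assert (HI1 := FBI r x ltac:(lra)). assert (HI2 := FBI r' x' ltac:(lra)).
eapply Rle_trans. apply ccosh_diff.
rewrite II by lra. rewrite II by lra.
assert (Hsq : Cmod (Cminus (Cmult (RtoC (r - x)) (Cmult (J r x) (J r x))) (Cmult (RtoC (r' - x')) (Cmult (J r' x') (J r' x'))))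
   <= (BJ * BJ + 2 * BJ * LJ) * dd).
{ replace (Cminus (Cmult (RtoC (r - x)) (Cmult (J r x) (J r x))) (Cmult (RtoC (r' - x')) (Cmult (J r' x') (J r' x'))))
    with (Cplus (Cmult (RtoC ((r - x) - (r' - x'))) (Cmult (J r x) (J r x)))
                (Cmult (RtoC (r' - x')) (Cmult (Cminus (J r x) (J r' x')) (Cplus (J r x) (J r' x'))))).
  2: { replace (RtoC ((r - x) - (r' - x'))) with (Cminus (RtoC (r - x)) (RtoC (r' - x'))). ring.
       unfold Cminus, Cplus, Copp, RtoC; simpl. f_equal; ring. }
  eapply Rle_trans. apply Cmod_triangle. rewrite !Cmod_mult, !Cmod_R.
  assert (A1 : Rabs (r - x - (r' - x')) <= dd).
  { unfold dd. replace (r - x - (r' - x')) with ((r - r') - (x - x')) by ring.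
    eapply Rle_trans. apply Rabs_triang. rewrite Rabs_Ropp. lra. }
  assert (A2 : Rabs (r' - x') <= 1) by (rewrite Rabs_right; lra).
  assert (A3 : Cmod (Cplus (J r x) (J r' x')) <= 2 * BJ).
  { eapply Rle_trans. apply Cmod_triangle. generalize (FBJ r x) (FBJ r' x'). lra. }
  assert (A4 := FLJ r x r' x'). fold dd in A4.
  generalize (FBJ r x) (Cmod_ge_0 (J r x)) (Rabs_pos (r - x - (r' - x'))) (Rabs_pos (r' - x'))
    (Cmod_ge_0 (Cminus (J r x) (J r' x'))) (Cmod_ge_0 (Cplus (J r x) (J r' x'))). intros.
  assert (B1 : Rabs (r - x - (r' - x')) * (Cmod (J r x) * Cmod (J r x)) <= dd * (BJ * BJ)).
  { apply Rmult_le_compat; auto. apply Rmult_le_pos; auto. apply Rmult_le_compat; auto. }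
  assert (B2 : Cmod (Cminus (J r x) (J r' x')) * Cmod (Cplus (J r x) (J r' x')) <= (LJ * dd) * (2 * BJ)).
  { apply Rmult_le_compat; auto. }
  assert (B3 : Rabs (r' - x') * (Cmod (Cminus (J r x) (J r' x')) * Cmod (Cplus (J r x) (J r' x'))) <= 1 * ((LJ * dd) * (2 * BJ))).
  { apply Rmult_le_compat; auto. apply Rmult_le_pos; auto. }
  nra. }
assert (Hexp : exp (Cmod (I r x) + Cmod (I r' x')) <= exp (BI + BI)).
{ destruct (Req_dec (Cmod (I r x) + Cmod (I r' x')) (BI + BI)). rewrite H; lra. left; apply exp_increasing; lra. }
assert (0 <= BJ * BJ + 2 * BJ * LJ) by nra.
apply Rle_trans with (/ 2 * ((BJ * BJ + 2 * BJ * LJ) * dd) * exp (BI + BI)).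
{ apply Rmult_le_compat. generalize (Cmod_ge_0 (Cminus (Cmult (RtoC (r - x)) (Cmult (J r x) (J r x))) (Cmult (RtoC (r' - x')) (Cmult (J r' x') (J r' x'))))). lra.
  left; apply exp_pos. lra. auto. }
generalize (exp_pos (BI + BI)). intros. 
replace (/ 2 * (BJ * BJ + 2 * BJ * LJ) * exp (BI + BI) * 2 * Rmax (Rabs (r - r')) (Rabs (x - x'))) with
  (/ 2 * (BJ * BJ + 2 * BJ * LJ) * exp (BI + BI) * (2 * Rmax (Rabs (r - r')) (Rabs (x - x')))) by ring.
replace (/ 2 * ((BJ * BJ + 2 * BJ * LJ) * dd) * exp (BI + BI)) with (/ 2 * (BJ * BJ + 2 * BJ * LJ) * exp (BI + BI) * dd) by ring.
apply Rmult_le_compat_l. apply Rmult_le_pos. nra. lra. auto.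
Qed.

Lemma ccosh0 : ccosh (RtoC 0) = RtoC 1.
Proof. unfold ccosh, cexp, RtoC, Copp, Cmult, Cplus; simpl. rewrite Ropp_0, exp_0, cos_0, sin_0. f_equal; field. Qed.

Lemma I_diag r0 : R0 <= r0 <= 1 -> forall eps, 0 < eps -> exists delta, 0 < delta /\
  forall r x, tri R0 1 r x -> Rabs (r - r0) < delta -> Rabs (x - r0) < delta ->
  Cmod (Cminus (ccosh (I r x)) (RtoC 1)) < eps.
Proof.
intros Hr0 eps Heps.
destruct J_bnd as [BJ [HBJ FBJ]]. destruct I_bnd as [BI [HBI FBI]].
set (M := BJ * BJ * exp BI).
assert (HM : 0 <= M) by (unfold M; generalize (exp_pos BI); intros; apply Rmult_le_pos; nra).
exists (eps / (M + 1)). split. apply Rdiv_lt_0_compat; lra.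
intros r x [H1 [H2 H3]] Hr Hx.
rewrite <- ccosh0. eapply Rle_lt_trans. apply ccosh_diff.
rewrite II by lra.
replace (Cminus (Cmult (RtoC (r - x)) (Cmult (J r x) (J r x))) (Cmult (RtoC 0) (RtoC 0)))
  with (Cmult (RtoC (r - x)) (Cmult (J r x) (J r x))) by ring.
rewrite !Cmod_mult, Cmod_R, Cmod_0, Rplus_0_r.
rewrite Rabs_right by lra.
assert (HI := FBI r x ltac:(lra)).
assert (Hexp : exp (Cmod (I r x)) <= exp BI).
{ destruct (Req_dec (Cmod (I r x)) BI). rewrite H; lra. left; apply exp_increasing; lra. }
assert (Hrx : r - x < 2 * (eps / (M + 1))).
{ apply Rabs_def2 in Hr. apply Rabs_def2 in Hx. lra. }
generalize (FBJ r x) (Cmod_ge_0 (J r x)) (exp_pos (Cmod (I r x))). intros.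
assert (JJ : Cmod (J r x) * Cmod (J r x) <= BJ * BJ) by (apply Rmult_le_compat; auto).
apply Rle_lt_trans with (/ 2 * ((r - x) * (BJ * BJ)) * exp BI).
{ apply Rmult_le_compat. apply Rmult_le_pos. lra. apply Rmult_le_pos. lra. nra. lra.
  apply Rmult_le_compat_l. lra. apply Rmult_le_compat_l. lra. auto. auto. }
replace (/ 2 * ((r - x) * (BJ * BJ)) * exp BI) with (/ 2 * (r - x) * M) by (unfold M; ring).
apply Rle_lt_trans with (eps / (M + 1) * M).
{ apply Rmult_le_compat_r. auto. lra. }
apply Rlt_le_trans with (eps / (M + 1) * (M + 1)). apply Rmult_lt_compat_l. apply Rdiv_lt_0_compat; lra. lra.
right. field. lra.
Qed.

Lemma main_result : exists I : R -> R -> C,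
    (forall r x, tri R0 1 r x ->
       is_RInt_gen (fun u => Cmult (lam u) (RtoC (Hfun c u x)))
         (at_right x) (at_point r) (I r x)) /\
    (exists L, forall r x r' x', tri R0 1 r x -> tri R0 1 r' x' ->
       Cmod (Cminus (ccosh (I r x)) (ccosh (I r' x')))
         <= L * Rmax (Rabs (r - r')) (Rabs (x - x'))) /\
    (forall r0, R0 <= r0 <= 1 ->
       forall eps, 0 < eps -> exists delta, 0 < delta /\
         forall r x, tri R0 1 r x -> Rabs (r - r0) < delta -> Rabs (x - r0) < delta ->
           Cmod (Cminus (ccosh (I r x)) (RtoC 1)) < eps).
Proof.
exists I. split. apply I_gen. split. apply I_lip. apply I_diag.
Qed.

End Main.

Theorem lemma5p2 (R0 : R) (c : R -> R) (lam : R -> C)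
  (hR0 : 0 < R0 < 1)
  (hcpos : forall r, R0 <= r <= 1 -> 0 < c r)
  (hc : C11_on c R0 1)
  (hHerglotz : exists g', has_deriv_on (fun r => r / c r) g' R0 1 /\
                 forall r, R0 <= r <= 1 -> 0 < g' r)
  (hlam : lipschitz_on_C lam R0 1) :
  exists I : R -> R -> C,
    (forall r x, tri R0 1 r x ->
       is_RInt_gen (fun u => Cmult (lam u) (RtoC (Hfun c u x)))
         (at_right x) (at_point r) (I r x)) /\
    (exists L, forall r x r' x', tri R0 1 r x -> tri R0 1 r' x' ->
       Cmod (Cminus (ccosh (I r x)) (ccosh (I r' x')))
         <= L * Rmax (Rabs (r - r')) (Rabs (x - x'))) /\
    (forall r0, R0 <= r0 <= 1 ->
       forall eps, 0 < eps -> exists delta, 0 < delta /\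
         forall r x, tri R0 1 r x -> Rabs (r - r0) < delta -> Rabs (x - r0) < delta ->
           Cmod (Cminus (ccosh (I r x)) (RtoC 1)) < eps).
Proof.
destruct hc as [c' [hcd [Lc' hc'L]]].
destruct hHerglotz as [g' [hgd hgpos]].
destruct hlam as [Llam hlamL].
exact (main_result R0 c c' g' lam Lc' Llam hR0 hcpos hcd hc'L hgd hgpos hlamL).
Qed.
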